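(* Let $M$ and $N$ be monoids with finite generating sets $X$ and $Y$ respectively, and let $f:(M,d_X)\to(N,d_Y)$ be a quasi-isometric embedding. If $S\subseteq M$ is infinite, then $f(S)$ is infinite.
   Context: For a monoid $M$ generated by a finite set $X$, $d_X(x,y)=\inf\{|w|:w\in X^*,\ xw=y\}$, where $X^*$ is the free monoid on $X$ and $\inf\emptyset=\infty$. A map $f:(M,d_X)\to(N,d_Y)$ is a quasi-isometric embedding if there are constants $1\le\lambda<\infty$, $0<\epsilon<\infty$ with $\frac1\lambda d_X(x,y)-\epsilon\le d_Y(f(x),f(y))\le\lambda d_X(x,y)+\epsilon$ for all $x,y\in M$ (with $\infty$ absorbing addition and multiplication by positive reals). *)

(* Defs.v *)
From HB Require Import structures.
From mathcomp Require Import all_boot all_order all_algebra.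
From mathcomp Require Import all_classical all_reals ereal.
Set Implicit Arguments. Unset Strict Implicit. Unset Printing Implicit Defensive.
Import Order.TTheory GRing.Theory Num.Theory.

Local Open Scope classical_set_scope.
Local Open Scope ereal_scope.

Definition word_eval (M : monoidType) (w : seq M) : M :=
  (\prod_(a <- w) a)%g.

Definition generates (M : monoidType) (X : seq M) : Prop :=
  forall m : M, exists w : seq M, {subset w <= X} /\ word_eval w = m.

Definition dist (R : realType) (M : monoidType) (X : seq M) (x y : M) : \bar R :=
  ereal_inf [set ((size w)%:R)%:E | w in
     [set w : seq M | {subset w <= X} /\ (x * word_eval w)%g = y]].

Definition quasi_isometric_embedding (R : realType) (M N : monoidType)
    (X : seq M) (Y : seq N) (f : M -> N) : Prop :=
  exists (lam eps : R), (1 <= lam)%R /\ (0 < eps)%R /\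
    forall x y : M,
      (lam^-1)%:E * dist R X x y - eps%:E <= dist R Y (f x) (f y) /\
      dist R Y (f x) (f y) <= lam%:E * dist R X x y + eps%:E.

(* Main.v *)
Require Import Defs.
From HB Require Import structures.
From mathcomp Require Import all_boot all_order all_algebra.
From mathcomp Require Import all_classical all_reals ereal.
From mathcomp Require Import lra.
Import Order.TTheory GRing.Theory Num.Theory.
Local Open Scope classical_set_scope.

Definition Wn (M : monoidType) (X : seq M) (n : nat) : set (seq M) :=
  [set w | {subset w <= X} /\ size w = n].

Arguments Wn {M}.

Lemma Wn_finite (M : monoidType) (X : seq M) n : finite_set (Wn X n).
Proof.
elim: n => [|n IH].
  apply: (@sub_finite_set _ _ [set [::]]); last exact: finite_set1.
  by move=> [|a w] [_ //].
apply: (@sub_finite_set _ _ [set p.1 :: p.2 | p in [set` X] `*` Wn X n]).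
  move=> [|a w] [Hs //] [Hn]; exists (a, w) => //; split => /=.
    by apply: Hs; rewrite inE eqxx.
  by split=> // x xw; apply: Hs; rewrite inE xw orbT.
apply: finite_image; apply: finite_setX => //; exact: finite_seq.
Qed.

Lemma dist_refl (R : realType) (M : monoidType) (X : seq M) (a : M) :
  (dist R X a a <= 0)%E.
Proof.
apply: ge_ereal_inf; exists 0%:E => //; exists [::] => //.
by split=> //; rewrite /word_eval big_nil mulg1.
Qed.

Arguments dist_refl R {M}.
Arguments Wn_finite {M}.

Theorem lemma7p1 (R : realType) (M N : monoidType) (X : seq M) (Y : seq N)
    (hX : generates X) (hY : generates Y) (f : M -> N)
    (hf : quasi_isometric_embedding R X Y f) (S : set M) :
  infinite_set S -> infinite_set (f @` S).
Proof.
case: hf => lam [eps [lam1 [eps0 H]]].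
set K := (lam * eps)%R.
set Nn := (Num.trunc K).+1.
have fib : forall x0 y, f y = f x0 ->
    exists w, {subset w <= X} /\ (size w < Nn)%N /\ (x0 * word_eval w)%g = y.
  move=> x0 y fy.
  have [H1 _] := H x0 y.
  rewrite fy in H1.
  have H2 := le_trans H1 (dist_refl R Y (f x0)).
  have lt : (dist R X x0 y < Nn%:R%:E)%E.
    have Kl : (K < Nn%:R)%R by exact: truncnS_gt.
    move: H2; case: (dist R X x0 y) => [r| |] //.
    - rewrite -EFinM -EFinB lee_fin lte_fin => h.
      have lp : (0 < lam)%R by lra.
      have hr : (r <= K)%R.
        have li : (lam * lam^-1 = 1)%R by rewrite mulfV // lt0r_neq0.
        have p : (0 <= lam * (eps - lam^-1 * r))%R by apply: mulr_ge0; lra.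
        have e : (lam * (eps - lam^-1 * r) = lam * eps - r)%R.
          by rewrite mulrBr mulrA li mul1r.
        rewrite e in p; rewrite /K. lra.
      lra.
    - rewrite gt0_muley ?lte_fin ?invr_gt0; last lra.
      by [].
    - by rewrite ltNye.
  have [y1 [w [Hw Hwy] <-]] := ereal_inf_lt lt.
  rewrite lte_fin ltr_nat => sw.
  by exists w.
move=> Sinf Sfin; apply: Sinf.
apply: (@sub_finite_set _ _ (\bigcup_(z in f @` S) [set y | S y /\ f y = z])).
  by move=> y Sy; exists (f y) => //; exists y.
apply: bigcup_finite => // z [x0 Sx0 <-].
apply: (@sub_finite_set _ _
   [set (x0 * word_eval w)%g | w in \bigcup_(k in `I_Nn) Wn X k]).
  move=> y [Sy fy]; have [w [Hw [sw <-]]] := fib x0 y fy.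
  by exists w => //; exists (size w).
apply: finite_image; apply: bigcup_finite; first exact: finite_II.
by move=> k _; exact: Wn_finite.
Qed.
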